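(* Fix $\epsilon\in[0,1/3)$ and $\zeta\in(0,1)$, and suppose the local identification assumption holds. Let $\hat\theta\in\Theta$ be the estimator returned by the numerical optimizer. Suppose there is an event $E$ of probability at least $1-\zeta$ on which: (i) for every $k\in[L]$ and every $\theta\in\mathcal B_0$, $$\Big\|\sum_{n=1}^N\hat w^{(k)}_n(\theta)\check g^{(k)}_n(\theta)-\mu^{(k)}_g(\theta)\Big\|_2\le\delta_{\mu,k}(\zeta)+\alpha_\epsilon\sqrt{C_k},\qquad\alpha_\epsilon=\sqrt{\tfrac{\epsilon}{1-2\epsilon}}$$ (as guaranteed, under high-probability inlier stability, by the SGR reweighting with $C_k=C_{stop,k}$ or $C_k=\sup_{\theta\in\mathcal B_0}\|\Sigma^{(k)}_g(\theta)\|_{op}+\delta_{\Sigma,k}(\zeta)+(\delta_{\mu,k}(\zeta)+R_k)^2+\delta_{T,k}$); and (ii) $\hat\theta\in\mathcal B_0$ and $\|\hat\Psi^{SGR}(\hat\theta)\|_2\le\delta_{opt}$. Then on $E$ (hence with probability at least $1-\zeta$), $$\|\hat\theta-\theta^\star\|_2\le\frac{2}{\lambda^\star}\Big(\sum_{k=1}^La_k\big(\delta_{\mu,k}(\zeta)+\alpha_\epsilon\sqrt{C_k}\big)+\delta_{opt}\Big).$$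
   Context: Let $\Theta\subseteq\mathbb R^p$, $\theta^\star\in\Theta$, $L\ge1$, population moment blocks $m_k:\Theta\to\mathbb R^{q_k}$, $m=(m_1,\dots,m_L):\Theta\to\mathbb R^q$, Jacobian $G(\theta)=\nabla_\theta m(\theta)\in\mathbb R^{q\times p}$, $W\in\mathbb R^{q\times q}$ symmetric PSD, and population GMM score $\Psi(\theta)=G(\theta)^\top Wm(\theta)$. Local identification assumption: there is $r_0>0$ with $\mathcal B_0=\{\theta:\|\theta-\theta^\star\|_2\le r_0\}\subseteq\Theta$ and (i) $m(\theta^\star)=0$; (ii) $m$ is $C^1$ on $\mathcal B_0$ with $\|G(\theta)-G(\theta')\|_{op}\le L_G\|\theta-\theta'\|_2$ on $\mathcal B_0$; (iii) $\lambda^\star=\lambda_{\min}((G^\star)^\top WG^\star)>0$ where $G^\star=G(\theta^\star)$; (iv) $\|W\|_{op}L_Gr_0(\frac32\|G^\star\|_{op}+\frac12L_Gr_0)\le\lambda^\star/2$. For each $k\in[L]$, $n\in[N]$ and $\theta$, $\check g^{(k)}_n(\theta)\in\mathbb R^p$ is the per-observation gradient of the order-$k$ moment-matching objective evaluated at the (possibly $\epsilon$-contaminated) $n$-th observation, with inlier population mean $\mu^{(k)}_g(\theta)\in\mathbb R^p$; $a_1,\dots,a_L\ge0$ are scalars with $\Psi(\theta)=\sum_{k=1}^La_k\mu^{(k)}_g(\theta)$ for $\theta\in\mathcal B_0$. The capped simplex is $\Delta_{N,\epsilon}=\{w\in\mathbb R^N:\sum_nw_n=1,0\le w_n\le\frac1{(1-\epsilon)N}\}$;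 $\hat w^{(k)}(\theta)\in\Delta_{N,\epsilon}$ are the reweighting weights computed on the cloud $\{\check g^{(k)}_n(\theta)\}_n$, and $\hat\Psi^{SGR}(\theta)=\sum_{k=1}^La_k\sum_{n=1}^N\hat w^{(k)}_n(\theta)\check g^{(k)}_n(\theta)$. The constants $\delta_{\mu,k}(\zeta),C_k,\delta_{opt}\ge0$ are given. *)

(* Defs.v *)
From HB Require Import structures.
From mathcomp Require Import all_boot all_order all_algebra.
From mathcomp Require Import all_classical all_reals all_analysis.
Set Implicit Arguments. Unset Strict Implicit. Unset Printing Implicit Defensive.
Import Order.TTheory GRing.Theory Num.Theory.
Import numFieldNormedType.Exports.
Local Open Scope classical_set_scope.
Local Open Scope ring_scope.

Section Defs.
Variable R : realType.

Definition norm2 (n : nat) (v : 'cV[R]_n) : R :=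
  Num.sqrt (\sum_(i < n) v i 0 ^+ 2).

Definition opnorm (m n : nat) (A : 'M[R]_(m, n)) : R :=
  sup [set norm2 (A *m x) | x in [set x : 'cV[R]_n | norm2 x <= 1]].

Definition lambda_min (n : nat) (M : 'M[R]_n) : R :=
  inf [set a : R | eigenvalue M a].

Definition ball2 (n : nat) (c : 'cV[R]_n) (r : R) : set 'cV[R]_n :=
  [set x | norm2 (x - c) <= r].

Definition capped_simplex (N : nat) (eps : R) (w : 'I_N -> R) : Prop :=
  \sum_(n < N) w n = 1 /\
  (forall n, 0 <= w n /\ w n <= (((1 - eps) * N%:R)^-1)).

Definition sym_psd (n : nat) (W : 'M[R]_n) : Prop :=
  W^T = W /\ (forall x : 'cV[R]_n, 0 <= (x^T *m W *m x) 0 0).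

End Defs.

(* Main.v *)
Require Import Defs.
From HB Require Import structures.
From mathcomp Require Import all_boot all_order all_algebra.
From mathcomp Require Import all_classical all_reals all_analysis.
From mathcomp Require Import ring lra.
Import Order.TTheory GRing.Theory Num.Theory.
Import numFieldNormedType.Exports.
Local Open Scope classical_set_scope.
Local Open Scope ring_scope.
Set Implicit Arguments. Unset Strict Implicit. Unset Printing Implicit Defensive.
Definition dot (R : realType) n (x y : 'cV[R]_n) : R := \sum_(i < n) x i 0 * y i 0.

Lemma dotC (R : realType) n (x y : 'cV[R]_n) : dot x y = dot y x.
Proof. by apply: eq_bigr => i _; rewrite mulrC. Qed.

Lemma dotDl (R : realType) n (x y z : 'cV[R]_n) : dot (x + y) z = dot x z + dot y z.
Proof. by rewrite /dot -big_split; apply: eq_bigr => i _; rewrite mxE mulrDl. Qed.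

Lemma dotZl (R : realType) n a (x y : 'cV[R]_n) : dot (a *: x) y = a * dot x y.
Proof. by rewrite /dot mulr_sumr; apply: eq_bigr => i _; rewrite mxE mulrA. Qed.

Lemma dotNl (R : realType) n (x y : 'cV[R]_n) : dot (- x) y = - dot x y.
Proof. by rewrite -scaleN1r dotZl mulN1r. Qed.

Lemma dotBl (R : realType) n (x y z : 'cV[R]_n) : dot (x - y) z = dot x z - dot y z.
Proof. by rewrite dotDl dotNl. Qed.

Lemma dotDr (R : realType) n (x y z : 'cV[R]_n) : dot z (x + y) = dot z x + dot z y.
Proof. by rewrite dotC dotDl !(dotC z). Qed.

Lemma dotZr (R : realType) n a (x y : 'cV[R]_n) : dot y (a *: x) = a * dot y x.
Proof. by rewrite dotC dotZl dotC. Qed.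

Lemma dotBr (R : realType) n (x y z : 'cV[R]_n) : dot z (x - y) = dot z x - dot z y.
Proof. by rewrite dotC dotBl !(dotC z). Qed.

Lemma dot0l (R : realType) n (y : 'cV[R]_n) : dot 0 y = 0.
Proof. by rewrite /dot big1 // => i _; rewrite mxE mul0r. Qed.

Lemma dot0r (R : realType) n (y : 'cV[R]_n) : dot y 0 = 0.
Proof. by rewrite dotC dot0l. Qed.

Lemma dotsum (R : realType) n I (r : seq I) (P : pred I) (F : I -> 'cV[R]_n) y :
  dot (\sum_(i <- r | P i) F i) y = \sum_(i <- r | P i) dot (F i) y.
Proof.
elim/big_rec2: _ => [|i a b Pi <-]; first by rewrite dot0l.
by rewrite dotDl.
Qed.

Lemma dot_ge0 (R : realType) n (x : 'cV[R]_n) : 0 <= dot x x.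
Proof. by rewrite /dot sumr_ge0 // => i _; rewrite -expr2 sqr_ge0. Qed.

Lemma dot_eq0 (R : realType) n (x : 'cV[R]_n) : dot x x = 0 -> x = 0.
Proof.
move=> h; apply/matrixP => i j; rewrite (ord1 j) mxE.
have /eqP := h; rewrite psumr_eq0 => [/allP H|k _]; last by rewrite -expr2 sqr_ge0.
have := H i (mem_index_enum _); rewrite -expr2 sqrf_eq0 => /eqP //.
Qed.

Lemma dotmul (R : realType) n k (A : 'M[R]_(n, k)) x y :
  dot x (A *m y) = dot (A^T *m x) y.
Proof.
rewrite /dot.
under eq_bigr do rewrite mxE mulr_sumr.
rewrite exchange_big /=; apply: eq_bigr => j _; rewrite mxE mulr_suml.
by apply: eq_bigr => i _; rewrite mxE mulrCA mulrA.
Qed.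

Lemma norm2E (R : realType) n (x : 'cV[R]_n) : norm2 x = Num.sqrt (dot x x).
Proof. by rewrite /norm2 /dot; congr Num.sqrt; apply: eq_bigr => i _; rewrite expr2. Qed.

Lemma norm2_ge0 (R : realType) n (x : 'cV[R]_n) : 0 <= norm2 x.
Proof. by rewrite norm2E sqrtr_ge0. Qed.

Lemma norm2_sq (R : realType) n (x : 'cV[R]_n) : norm2 x ^+ 2 = dot x x.
Proof. by rewrite norm2E sqr_sqrtr // dot_ge0. Qed.

Lemma norm2_0 (R : realType) n : norm2 (0 : 'cV[R]_n) = 0.
Proof. by rewrite norm2E dot0l sqrtr0. Qed.

Lemma norm2_eq0 (R : realType) n (x : 'cV[R]_n) : norm2 x = 0 -> x = 0.
Proof. by move=> h; apply: dot_eq0; rewrite -norm2_sq h expr0n. Qed.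

Lemma CS2 (R : realType) n (x y : 'cV[R]_n) : dot x y ^+ 2 <= dot x x * dot y y.
Proof.
have [y0|yn0] := eqVneq (dot y y) 0.
  by rewrite (dot_eq0 y0) dot0r dot0l expr0n /= mulr0.
have ypos : 0 < dot y y by rewrite lt_def yn0 dot_ge0.
set t := dot x y / dot y y.
have := dot_ge0 (x - t *: y).
rewrite !(dotBl, dotBr, dotZl, dotZr) (dotC y x) => H.
have e : dot x x - t * dot x y - t * (dot x y - t * dot y y)
   = dot x x - dot x y ^+ 2 / dot y y by rewrite /t; field.
move: H; rewrite e subr_ge0 ler_pdivrMr //.
Qed.

Lemma CS (R : realType) n (x y : 'cV[R]_n) : `|dot x y| <= norm2 x * norm2 y.
Proof.
rewrite !norm2E -sqrtrM ?dot_ge0 // -sqrtr_sqr ler_sqrt ?CS2 //.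
by rewrite mulr_ge0 ?dot_ge0.
Qed.

Lemma CS' (R : realType) n (x y : 'cV[R]_n) : dot x y <= norm2 x * norm2 y.
Proof. exact: le_trans (ler_norm _) (CS x y). Qed.

Lemma norm2D (R : realType) n (x y : 'cV[R]_n) : norm2 (x + y) <= norm2 x + norm2 y.
Proof.
rewrite -(ler_pXn2r (n:=2)) // ?nnegrE ?addr_ge0 ?norm2_ge0 //.
rewrite norm2_sq !(dotDl, dotDr) sqrrD !norm2_sq (dotC y x).
have := CS' x y; lra.
Qed.

Lemma norm2Z (R : realType) n a (x : 'cV[R]_n) : norm2 (a *: x) = `|a| * norm2 x.
Proof.
by rewrite !norm2E dotZl dotZr mulrA sqrtrM ?mul_self_ge0 // -expr2 ?sqr_ge0 // (sqrtr_sqr a).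
Qed.

Lemma norm2N (R : realType) n (x : 'cV[R]_n) : norm2 (- x) = norm2 x.
Proof. by rewrite -scaleN1r norm2Z normrN1 mul1r. Qed.

Lemma norm2B (R : realType) n (x y : 'cV[R]_n) : norm2 (x - y) <= norm2 x + norm2 y.
Proof. by rewrite -(norm2N y) norm2D. Qed.

Lemma norm2_sum (R : realType) n I (r : seq I) (P : pred I) (F : I -> 'cV[R]_n) :
  norm2 (\sum_(i <- r | P i) F i) <= \sum_(i <- r | P i) norm2 (F i).
Proof.
elim/big_rec2: _ => [|i a b Pi IH]; first by rewrite norm2_0.
exact: le_trans (norm2D _ _) (lerD (lexx _) IH).
Qed.

Lemma dotmulT (R : realType) n k (A : 'M[R]_(k, n)) (x : 'cV[R]_n) (y : 'cV[R]_k) :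
  dot x (A^T *m y) = dot (A *m x) y.
Proof. by rewrite dotmul trmxK. Qed.

Lemma frob_bound (R : realType) m n (A : 'M[R]_(m, n)) (x : 'cV[R]_n) :
  norm2 (A *m x) <= Num.sqrt (\sum_(i < m) \sum_(j < n) A i j ^+ 2) * norm2 x.
Proof.
rewrite norm2E (norm2E x) -sqrtrM; last by rewrite sumr_ge0 // => i _; rewrite sumr_ge0 // => j _; rewrite sqr_ge0.
rewrite ler_sqrt; last by rewrite mulr_ge0 ?dot_ge0 // sumr_ge0 // => i _; rewrite sumr_ge0 // => j _; rewrite sqr_ge0.
rewrite /dot mulr_suml; apply: ler_sum => i _.
pose a : 'cV[R]_n := \col_j A i j.
have -> : (A *m x) i 0 = dot a x by rewrite mxE /dot; apply: eq_bigr => j _; rewrite mxE.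
rewrite -expr2 (le_trans (CS2 a x)) //.
apply: ler_pM; first exact: dot_ge0; first exact: dot_ge0; last exact: lexx.
by rewrite /dot; apply: ler_sum => j _; rewrite mxE expr2.
Qed.

Lemma opnorm_hassup (R : realType) m n (A : 'M[R]_(m, n)) :
  has_sup [set norm2 (A *m x) | x in [set x : 'cV[R]_n | norm2 x <= 1]].
Proof.
split; first by exists (norm2 (A *m 0)), 0 => //=; rewrite norm2_0.
exists (Num.sqrt (\sum_(i < m) \sum_(j < n) A i j ^+ 2)) => _ [x /= hx <-].
apply: le_trans (frob_bound A x) _.
by rewrite ler_piMr ?sqrtr_ge0.
Qed.

Lemma opnorm_ge0 (R : realType) m n (A : 'M[R]_(m, n)) : 0 <= opnorm A.
Proof.
rewrite /opnorm; apply: le_trans (sup_upper_bound (opnorm_hassup A) _).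
  exact: lexx.
by exists 0; rewrite /= ?norm2_0 // mulmx0 norm2_0.
Qed.

Lemma opnorm_bound (R : realType) m n (A : 'M[R]_(m, n)) (x : 'cV[R]_n) :
  norm2 (A *m x) <= opnorm A * norm2 x.
Proof.
have [->|xn0] := eqVneq x 0; first by rewrite mulmx0 !norm2_0 mulr0.
have npos : 0 < norm2 x.
  by rewrite lt_def norm2_ge0 andbT; apply/eqP => /norm2_eq0; apply/eqP.
rewrite -ler_pdivrMr //.
have -> : norm2 (A *m x) / norm2 x = norm2 (A *m ((norm2 x)^-1 *: x)).
  by rewrite -scalemxAr norm2Z ger0_norm ?invr_ge0 ?norm2_ge0 // mulrC.
apply: sup_upper_bound; first exact: opnorm_hassup.
exists ((norm2 x)^-1 *: x) => //=.
by rewrite norm2Z ger0_norm ?invr_ge0 ?norm2_ge0 // mulVf // gt_eqF.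
Qed.

Lemma trmx_mul_vec (R : realType) n (M : 'M[R]_n) (x : 'cV[R]_n) :
  M^T = M -> (x^T *m M)^T = M *m x.
Proof. by move=> sM; rewrite trmx_mul trmxK sM. Qed.

Lemma quad_cont (R : realType) n (M : 'M[R]_n) :
  continuous (fun v : 'rV[R]_n => \sum_(i < n) v ord0 i * \sum_(j < n) M i j * v ord0 j).
Proof.
apply: (@continuous_big _ _ +%R 0 xpredT add_continuous) => i _.
move=> v; apply: continuousM; first exact: coord_continuous.
apply: (@continuous_big _ _ +%R 0 xpredT add_continuous) => j _.
move=> w; apply: continuousM; first exact: cst_continuous.
exact: coord_continuous.
Qed.

Lemma quadE (R : realType) n (M : 'M[R]_n) (v : 'rV[R]_n) :
  dot v^T (M *m v^T) = \sum_(i < n) v ord0 i * \sum_(j < n) M i j * v ord0 j.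
Proof.
rewrite /dot; apply: eq_bigr => i _; rewrite !mxE; congr (_ * _).
by apply: eq_bigr => j _; rewrite !mxE.
Qed.

Lemma sq_cont (R : realType) n :
  continuous (fun v : 'rV[R]_n => \sum_(i < n) v ord0 i * v ord0 i).
Proof.
apply: (@continuous_big _ _ +%R 0 xpredT add_continuous) => i _.
by move=> v; apply: continuousM; exact: coord_continuous.
Qed.

Lemma sqE (R : realType) n (v : 'rV[R]_n) :
  dot v^T v^T = \sum_(i < n) v ord0 i * v ord0 i.
Proof. by rewrite /dot; apply: eq_bigr => i _; rewrite !mxE. Qed.

Lemma exists_min_sphere (R : realType) n (M : 'M[R]_n) : (0 < n)%N ->
  exists x0 : 'cV[R]_n, dot x0 x0 = 1 /\
    forall x, dot x x = 1 -> dot x0 (M *m x0) <= dot x (M *m x).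
Proof.
move=> n0.
pose S := [set v : 'rV[R]_n | \sum_(i < n) v ord0 i * v ord0 i = 1].
have Scl : closed S.
  apply: (@preimage_closed _ _ (fun v : 'rV[R]_n => \sum_(i < n) v ord0 i * v ord0 i) [set 1]).
    by move=> v _; exact: sq_cont.
  exact: closed_eq.
have Sco : compact S.
  apply: (subclosed_compact Scl (@rV_compact _ n (fun=> `[(-1:R), 1]%classic) (fun _ => @segment_compact R _ _))).
  move=> v /= Sv i; rewrite /= in_itv /= -ler_norml.
  rewrite -(@ler_pXn2r _ 2%N) // ?nnegrE // expr1n real_normK ?num_real //.
  rewrite -Sv (bigD1 i) //= -expr2 lerDl sumr_ge0 // => j _.
  by rewrite -expr2 sqr_ge0.
have S0 : S !=set0.
  exists (\row_j ((j == Ordinal n0)%:R)); rewrite /S /= (bigD1 (Ordinal n0)) //= !mxE eqxx mulr1 big1 ?addr0 //.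
  by move=> j /negbTE jn; rewrite !mxE jn mulr0.
have [c cS cmin] := compact_EVT_min S0 Sco (continuous_subspaceT (@quad_cont R n M)).
exists c^T; split; first by rewrite sqE; move: cS; rewrite inE.
move=> x hx; rewrite -[x]trmxK !quadE; apply: cmin.
by rewrite inE /S /= -sqE trmxK.
Qed.

Lemma rayleigh (R : realType) n (M : 'M[R]_n) : M^T = M ->
  forall x : 'cV[R]_n, lambda_min M * dot x x <= dot x (M *m x).
Proof.
move=> sM x.
case: (posnP n) => [n0|n0].
  have -> : x = 0 by apply/matrixP => -[i hi] j; exfalso; have := hi; rewrite n0 ltn0.
  by rewrite mulmx0 !dot0l mulr0.
have [x0 [x01 x0min]] := exists_min_sphere M n0.
set mu := dot x0 (M *m x0).
have hsc : forall y : 'cV[R]_n, mu * dot y y <= dot y (M *m y).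
  move=> y; have [->|yn0] := eqVneq y 0; first by rewrite mulmx0 !dot0l mulr0.
  have ypos : 0 < dot y y.
    by rewrite lt_def dot_ge0 andbT; apply/eqP => /dot_eq0; apply/eqP.
  set s := Num.sqrt (dot y y).
  have spos : 0 < s by rewrite sqrtr_gt0.
  have s2 : s * s = dot y y by rewrite -expr2 sqr_sqrtr // dot_ge0.
  have := x0min (s^-1 *: y).
  rewrite -scalemxAr !(dotZl, dotZr) !mulrA -invfM s2 mulVf ?gt_eqF // => /(_ erefl).
  move=> h; have := ler_wpM2r (ltW ypos) h; by rewrite mulrAC mulVf ?gt_eqF // mul1r.
pose A := M - mu%:M.
have Aq : forall y, dot y (A *m y) = dot y (M *m y) - mu * dot y y.
  by move=> y; rewrite /A mulmxBl mul_scalar_mx dotBr dotZr.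
have AT : A^T = A by rewrite /A linearB /= tr_scalar_mx sM.
have Ax0 : A *m x0 = 0.
  set z := A *m x0.
  set a := dot z (A *m z).
  have a0 : 0 <= a by rewrite /a Aq subr_ge0 hsc.
  set b := dot z z.
  pose t := - b / (a + 1).
  have := hsc (x0 + t *: z).
  rewrite -subr_ge0 -Aq.
  have -> : dot (x0 + t *: z) (A *m (x0 + t *: z)) =
     dot x0 (A *m x0) + t * (dot x0 (A *m z) + dot z (A *m x0)) + t * t * a.
    rewrite mulmxDr -scalemxAr !(dotDl, dotDr, dotZl, dotZr) /a; ring.
  have -> : dot x0 (A *m x0) = 0 by rewrite Aq -/mu x01 mulr1 subrr.
  have -> : dot x0 (A *m z) = b by rewrite dotmul AT.
  rewrite -/b add0r => H.
  have bt : t * (a + 1) = - b by rewrite /t mulfVK // gt_eqF // ltr_wpDl.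
  have : t * t <= 0 by nra.
  have b0 : 0 <= b by exact: dot_ge0.
  move=> tt; have t0 : t = 0 by nra.
  apply: dot_eq0; rewrite -/b; move: bt; rewrite t0 mul0r => /eqP; rewrite eq_sym oppr_eq0 => /eqP //.
have Mx0 : M *m x0 = mu *: x0.
  by apply/eqP; rewrite -subr_eq0 -mul_scalar_mx -mulmxBl; apply/eqP.
have eigmu : eigenvalue M mu.
  apply/eigenvalueP; exists x0^T.
    by rewrite -[x0^T *m M]trmxK trmx_mul_vec // Mx0 linearZ.
  apply/eqP => h; move: x01; rewrite -[x0]trmxK h trmx0 dot0l => /eqP; rewrite eq_sym oner_eq0 //.
have lb : lbound [set a : R | eigenvalue M a] mu.
  move=> a /eigenvalueP [v vM vn0].
  have hv : M *m v^T = a *: v^T by rewrite -(trmx_mul_vec v^T) // trmxK vM linearZ.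
  have vpos : 0 < dot v^T v^T.
    rewrite lt_def dot_ge0 andbT; apply/eqP => /dot_eq0 /eqP.
    by rewrite -trmx0 (inj_eq (@trmx_inj _ _ _)); apply/negP.
  have := hsc v^T; rewrite hv dotZr ler_pM2r //.
have lmu : lambda_min M <= mu.
  by apply: (ge_inf (ex_intro _ mu lb)).
apply: le_trans (hsc x).
by rewrite ler_wpM2r ?dot_ge0.
Qed.

Lemma dot_lin (R : realType) n (u : 'cV[R]_n) : linear (fun y : 'cV[R]_n => (dot u y : R^o)).
Proof. by move=> a x y; rewrite dotDr dotZr. Qed.

Lemma dot_cont (R : realType) n (u : 'cV[R]_n) : continuous (fun y : 'cV[R]_n => (dot u y : R^o)).
Proof.
apply: (@continuous_big _ _ +%R 0 xpredT add_continuous) => i _.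
by move=> v; apply: continuousM; [exact: cst_continuous | exact: coord_continuous].
Qed.

Lemma phi_derive (R : realType) p q (m : 'cV[R]_p -> 'cV[R]_q) (c D : 'cV[R]_p)
   (u : 'cV[R]_q) (t : R) :
  differentiable m (c + t *: D) ->
  is_derive t 1 (fun s : R => (dot u (m (c + s *: D)) : R^o)) (dot u ('d m (c + t *: D) D)).
Proof.
move=> dm.
pose lM := GRing.isLinear.Build _ _ _ _ _ (dot_lin u).
pose lL : {linear 'cV[R]_q -> R^o} := HB.pack (fun y : 'cV[R]_q => (dot u y : R^o)) lM.
have dl : forall y, is_diff y lL lL.
  move=> y; apply: DiffDef; first by apply: linear_differentiable; exact: dot_cont.
  by apply: diff_lin; exact: dot_cont.
pose gam := (cst c + ( *:%R ^~ D)) : R -> 'cV[R]_p.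
have dgam : is_diff t gam (0 + ( *:%R ^~ D)) by apply: is_diffD.
have dmm : is_diff (gam t) m ('d m (c + t *: D)) by apply: differentiableP.
have dphi : is_diff t (lL \o (m \o gam)) (lL \o ('d m (c + t *: D) \o (0 + ( *:%R ^~ D)))).
  exact: is_diff_comp.
have -> : (fun s : R => (dot u (m (c + s *: D)) : R^o)) = lL \o (m \o gam) by [].
apply: DeriveDef; first exact: diff_derivable.
rewrite deriveE // diff_val /=.
by rewrite add0r scale1r.
Qed.

Lemma in_ball_seg (R : realType) p (c D : 'cV[R]_p) r0 s :
  norm2 D <= r0 -> 0 <= s <= 1 -> ball2 c r0 (c + s *: D).
Proof.
move=> hD /andP [s0 s1]; rewrite /ball2 /= addrAC subrr add0r norm2Z ger0_norm //.
apply: le_trans hD; rewrite ler_piMl ?norm2_ge0 //.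
Qed.

Lemma taylor (R : realType) p q (m : 'cV[R]_p -> 'cV[R]_q) (G : 'cV[R]_p -> 'M[R]_(q, p))
   (c D : 'cV[R]_p) (u : 'cV[R]_q) (LG r0 : R) :
  (forall th, ball2 c r0 th -> differentiable m th /\ (forall h, 'd m th h = G th *m h)) ->
  (forall th th', ball2 c r0 th -> ball2 c r0 th' ->
     opnorm (G th - G th') <= LG * norm2 (th - th')) ->
  norm2 D <= r0 ->
  dot u (m (c + D) - m c - G c *m D) <= norm2 u * LG * norm2 D ^+ 2 / 2.
Proof.
move=> hdiff hlip hD.
set A := dot u (G c *m D); set K := norm2 u * LG * norm2 D ^+ 2.
pose g := (fun s : R => (dot u (m (c + s *: D)) : R^o)) - (A \*: id) - ((K / 2) \*: (id * id)).
have dg : forall s : R, 0 <= s <= 1 ->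
    is_derive s 1 g (dot u (G (c + s *: D) *m D) - A - K * s).
  move=> s hs; have [dm dmv] := hdiff _ (in_ball_seg c hD hs).
  have h1 := phi_derive u dm.
  have h2 : is_derive s (1:R) (A \*: (id : R -> R^o)) (A *: 1) by apply: is_deriveZ.
  have h3 : is_derive s (1:R) ((K / 2) \*: ((id : R -> R^o) * id)) ((K/2) *: (s *: 1 + s *: 1)).
    by apply: is_deriveZ; apply: is_deriveM.
  apply: is_derive_eq (is_deriveB (is_deriveB h1 h2) h3) _.
  by rewrite dmv /GRing.scale /=; field.
have gcont : {within `[0, 1], continuous g}.
  apply: continuous_in_subspaceT => x; rewrite inE /= in_itv /= => hx.
  apply: differentiable_continuous; apply/derivable1_diffP.
  by case: (dg x hx).
have [xi hxi eq] := MVT (ltr01 : (0:R) < 1) (fun x hx => dg x (subset_itv_oo_cc hx)) gcont.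
move: hxi; rewrite in_itv /= => /andP [xi0 xi1].
have g10 : g 1 - g 0 <= 0.
  rewrite eq subr0 mulr1.
  have hxi01 : 0 <= xi <= 1 by rewrite !ltW.
  have hb := in_ball_seg c hD hxi01.
  have hc : ball2 c r0 c by rewrite /ball2 /= subrr norm2_0 (le_trans (norm2_ge0 D)).
  have hl := hlip _ _ hb hc.
  rewrite addrAC subrr add0r norm2Z (ger0_norm (ltW xi0)) in hl.
  rewrite -dotBr -mulmxBl.
  rewrite subr_le0.
  have hb2 := opnorm_bound (G (c + xi *: D) - G c) D.
  have hu := norm2_ge0 u; have hd := norm2_ge0 D.
  apply: le_trans (CS' _ _) _.
  apply: le_trans (ler_wpM2l hu hb2) _.
  have := ler_wpM2r hd hl => h4.
  apply: le_trans (ler_wpM2l hu (_ : _ <= LG * (xi * norm2 D) * norm2 D)) _.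
    by rewrite mulrA in h4 *.
  by rewrite /K le_eqVlt; apply/orP; left; apply/eqP; ring.
move: g10; rewrite /g /= !fctE /= scale0r scale1r addr0 /GRing.scale /=.
rewrite !dotBr /A; lra.
Qed.

Lemma core (R : realType) p q (m : 'cV[R]_p -> 'cV[R]_q) (G : 'cV[R]_p -> 'M[R]_(q, p))
   (W : 'M[R]_q) (th0 th : 'cV[R]_p) (r0 LG : R) :
  W^T = W -> m th0 = 0 ->
  (forall th, ball2 th0 r0 th -> differentiable m th /\ (forall h, 'd m th h = G th *m h)) ->
  (forall th th', ball2 th0 r0 th -> ball2 th0 r0 th' ->
     opnorm (G th - G th') <= LG * norm2 (th - th')) ->
  opnorm W * LG * r0 * (3 / 2 * opnorm (G th0) + 1 / 2 * LG * r0)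
    <= lambda_min ((G th0)^T *m W *m G th0) / 2 ->
  ball2 th0 r0 th ->
  lambda_min ((G th0)^T *m W *m G th0) / 2 * norm2 (th - th0) ^+ 2
    <= dot (th - th0) ((G th)^T *m W *m m th).
Proof.
move=> sW m0 hdiff hlip hcond hth.
set D := th - th0.
set lam := lambda_min ((G th0)^T *m W *m G th0).
set d := norm2 D.
have hd0 : 0 <= d := norm2_ge0 D.
have hdr : d <= r0 by [].
have [dz|dpos] := eqVneq d 0.
  by rewrite dz expr0n /= mulr0 (norm2_eq0 dz) dot0l.
have dpos' : 0 < d by rewrite lt_def dpos hd0.
have hc : ball2 th0 r0 th0 by rewrite /ball2 /= subrr norm2_0 (le_trans hd0 hdr).
have hl := hlip _ _ hth hc; rewrite -/D -/d in hl.
have L0 : 0 <= LG.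
  have := le_trans (opnorm_ge0 _) hl; rewrite pmulr_lge0 //.
have thE : th = th0 + D by rewrite /D addrC subrK.
set e := m th - G th0 *m D.
have he : norm2 e <= LG * d ^+ 2 / 2.
  have := taylor e hdiff hlip hdr.
  rewrite -thE m0 subr0 -/e -norm2_sq -/d => h.
  have [ez|epos] := eqVneq (norm2 e) 0.
    by rewrite ez divr_ge0 // mulr_ge0 // sqr_ge0.
  have epos' : 0 < norm2 e by rewrite lt_def epos norm2_ge0.
  rewrite -(ler_pM2l epos'); apply: le_trans h _.
  by rewrite le_eqVlt; apply/orP; left; apply/eqP; rewrite -!mulrA.
set f := (G th - G th0) *m D.
have hf : norm2 f <= LG * d * d.
  apply: le_trans (opnorm_bound _ _) _; rewrite -/d.
  by rewrite ler_wpM2r.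
set oW := opnorm W; set oG := opnorm (G th0).
have oW0 : 0 <= oW := opnorm_ge0 W.
have oG0 : 0 <= oG := opnorm_ge0 (G th0).
have hmth : m th = G th0 *m D + e by rewrite /e addrC subrK.
have hGth : G th *m D = G th0 *m D + f by rewrite /f mulmxBl addrC subrK.
have eq1 : dot D ((G th)^T *m W *m m th)
   = dot D ((G th0)^T *m W *m G th0 *m D) + dot f (W *m (G th0 *m D))
     + dot (G th *m D) (W *m e).
  rewrite -mulmxA dotmulT hmth mulmxDr dotDr hGth dotDl.
  by rewrite -!mulmxA dotmulT; ring.
rewrite eq1.
have ray := rayleigh (_ : ((G th0)^T *m W *m G th0)^T = _) D.
have sM : ((G th0)^T *m W *m G th0)^T = (G th0)^T *m W *m G th0.
  by rewrite !trmx_mul trmxK sW mulmxA.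
have r1 := ray sM; rewrite -/lam -norm2_sq -/d in r1.
have nWG : norm2 (W *m (G th0 *m D)) <= oW * (oG * d).
  have := opnorm_bound W (G th0 *m D); move=> hh; apply: le_trans hh _.
  by rewrite ler_wpM2l // opnorm_bound.
have t2 : - (norm2 f * (oW * (oG * d))) <= dot f (W *m (G th0 *m D)).
  rewrite lerNl; apply: le_trans (_ : _ <= `|dot _ _|) _; first by rewrite -normrN; exact: ler_norm.
  apply: le_trans (CS _ _) _.
  by rewrite ler_wpM2l ?norm2_ge0.
have nGD : norm2 (G th *m D) <= oG * d + LG * d * d.
  rewrite hGth; apply: le_trans (norm2D _ _) _.
  by apply: lerD => //; exact: opnorm_bound.
have nWe : norm2 (W *m e) <= oW * (LG * d ^+ 2 / 2).
  by have := opnorm_bound W e; move=> hh; apply: le_trans hh _; rewrite ler_wpM2l.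
have t3 : - ((oG * d + LG * d * d) * (oW * (LG * d ^+ 2 / 2))) <= dot (G th *m D) (W *m e).
  rewrite lerNl; apply: le_trans (_ : _ <= `|dot _ _|) _; first by rewrite -normrN; exact: ler_norm.
  apply: le_trans (CS _ _) _.
  apply: ler_pM => //; exact: norm2_ge0.
have nf0 := norm2_ge0 f.
have b2 : norm2 f * (oW * (oG * d)) <= oW * LG * r0 * oG * d ^+ 2.
  apply: le_trans (ler_wpM2r _ hf) _.
    by rewrite !mulr_ge0.
  have : LG * d * d * (oW * (oG * d)) = (oW * LG * oG * d ^+ 2) * d by ring.
  move=> ->; have : oW * LG * r0 * oG * d ^+ 2 = (oW * LG * oG * d ^+ 2) * r0 by ring.
  by move=> ->; rewrite ler_wpM2l // !mulr_ge0 // sqr_ge0.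
have b3 : (oG * d + LG * d * d) * (oW * (LG * d ^+ 2 / 2))
     <= oW * LG * r0 * (1 / 2 * oG + 1 / 2 * LG * r0) * d ^+ 2.
  have e3 : (oG * d + LG * d * d) * (oW * (LG * d ^+ 2 / 2))
       = (oW * LG * d ^+ 2 / 2) * (oG * d + LG * d * d) by ring.
  have e4 : oW * LG * r0 * (1 / 2 * oG + 1 / 2 * LG * r0) * d ^+ 2
       = (oW * LG * d ^+ 2 / 2) * (oG * r0 + LG * r0 * r0) by ring.
  rewrite e3 e4; apply: ler_wpM2l.
    by rewrite !mulr_ge0 // ?sqr_ge0 // invr_ge0.
  apply: lerD; first by rewrite ler_wpM2l.
  have h1 : LG * d * d <= LG * r0 * d by rewrite ler_wpM2r // ler_wpM2l.
  apply: le_trans h1 _; rewrite ler_wpM2l // mulr_ge0 //.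
  exact: le_trans hd0 hdr.
have hcd := ler_wpM2r (sqr_ge0 d) hcond.
have : oW * LG * r0 * (3 / 2 * oG + 1 / 2 * LG * r0) * d ^+ 2
   = oW * LG * r0 * oG * d ^+ 2 + oW * LG * r0 * (1 / 2 * oG + 1 / 2 * LG * r0) * d ^+ 2.
  by field.
move=> e5; rewrite e5 in hcd.
have hdd : d ^+ 2 = d * d by rewrite expr2.
lra.
Qed.

Lemma score_bound (R : realType) p L (a : 'I_L -> R) (mu : 'I_L -> 'cV[R]_p)
  (wg : 'I_L -> 'cV[R]_p) (err : 'I_L -> R) (dopt : R) :
  (forall k, 0 <= a k) ->
  (forall k, norm2 (wg k - mu k) <= err k) ->
  norm2 (\sum_(k < L) a k *: wg k) <= dopt ->
  norm2 (\sum_(k < L) a k *: mu k) <= \sum_(k < L) a k * err k + dopt.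
Proof.
move=> a0 herr hopt.
have -> : \sum_(k < L) a k *: mu k
   = \sum_(k < L) a k *: wg k - \sum_(k < L) a k *: (wg k - mu k).
  by rewrite -sumrB; apply: eq_bigr => k _; rewrite scalerBr opprB addrC subrK.
apply: le_trans (norm2B _ _) _.
rewrite addrC; apply: lerD => //.
apply: le_trans (norm2_sum _ _ _) _.
apply: ler_sum => k _; rewrite norm2Z ger0_norm //.
by rewrite ler_wpM2l.
Qed.

Unset Implicit Arguments.

Theorem mainTheorem15
  (R : realType) (p q L N : nat)
  (Theta : set 'cV[R]_p) (theta_star : 'cV[R]_p) (r0 LG : R)
  (m : 'cV[R]_p -> 'cV[R]_q) (G : 'cV[R]_p -> 'M[R]_(q, p)) (W : 'M[R]_q)
  (eps zeta : R)
  (mu_g : 'I_L -> 'cV[R]_p -> 'cV[R]_p) (a : 'I_L -> R)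
  (delta_mu : 'I_L -> R -> R) (C : 'I_L -> R) (delta_opt : R)
  (d : measure_display) (Omega : measurableType d) (P : probability Omega R)
  (E : set Omega)
  (gcheck : Omega -> 'I_L -> 'I_N -> 'cV[R]_p -> 'cV[R]_p)
  (what : Omega -> 'I_L -> 'cV[R]_p -> 'I_N -> R)
  (theta_hat : Omega -> 'cV[R]_p) :
  (* standing setup *)
  (0 < L)%N ->
  theta_star \in Theta ->
  sym_psd W ->
  (forall k, 0 <= a k) ->
  (forall k, 0 <= C k) ->
  0 <= delta_opt ->
  0 <= eps -> eps < 1 / 3 ->
  0 < zeta -> zeta < 1 ->
  (* local identification assumption *)
  0 < r0 ->
  ball2 theta_star r0 `<=` Theta ->
  m theta_star = 0 ->
  (forall th, ball2 theta_star r0 th ->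
     differentiable m th /\ (forall h, 'd m th h = G th *m h)) ->
  (forall th th', ball2 theta_star r0 th -> ball2 theta_star r0 th' ->
     opnorm (G th - G th') <= LG * norm2 (th - th')) ->
  0 < lambda_min ((G theta_star)^T *m W *m G theta_star) ->
  opnorm W * LG * r0 * (3 / 2 * opnorm (G theta_star) + 1 / 2 * LG * r0)
    <= lambda_min ((G theta_star)^T *m W *m G theta_star) / 2 ->
  (* population GMM score decomposes over the moment orders *)
  (forall th, ball2 theta_star r0 th ->
     (G th)^T *m W *m m th = \sum_(k < L) a k *: mu_g k th) ->
  (* reweighting weights lie in the capped simplex; estimator in Theta *)
  (forall w k th, capped_simplex eps (what w k th)) ->
  (forall w, theta_hat w \in Theta) ->
  (* the event E *)
  measurable E ->
  ((1 - zeta)%:E <= P E)%E ->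
  (forall w, E w ->
     (forall k th, ball2 theta_star r0 th ->
        norm2 (\sum_(n < N) what w k th n *: gcheck w k n th - mu_g k th)
          <= delta_mu k zeta + Num.sqrt (eps / (1 - 2 * eps)) * Num.sqrt (C k))
     /\ ball2 theta_star r0 (theta_hat w)
     /\ norm2 (\sum_(k < L) a k *:
                 \sum_(n < N) what w k (theta_hat w) n *: gcheck w k n (theta_hat w))
          <= delta_opt) ->
  let bound := 2 / lambda_min ((G theta_star)^T *m W *m G theta_star) *
      (\sum_(k < L) a k * (delta_mu k zeta
                            + Num.sqrt (eps / (1 - 2 * eps)) * Num.sqrt (C k))
       + delta_opt) in
  (forall w, E w -> norm2 (theta_hat w - theta_star) <= bound) /\
  (exists F : set Omega, measurable F /\ ((1 - zeta)%:E <= P F)%E /\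
     (forall w, F w -> norm2 (theta_hat w - theta_star) <= bound)).
Proof.
move=> L0 thT Wpsd a0 C0 dopt0 eps0 eps13 z0 z1 r0pos bsub m0 hdiff hlip lampos
  hcond hdec hsimp hth Emeas PE HE bound.
have key : forall w, E w -> norm2 (theta_hat w - theta_star) <= bound.
  move=> w Ew; have [Hk [hb hopt]] := HE w Ew.
  have sW : W^T = W by case: Wpsd.
  have hc := core sW m0 hdiff hlip hcond hb.
  rewrite (hdec _ hb) in hc.
  have hs := score_bound a0 (fun k => Hk k (theta_hat w) hb) hopt.
  set lam := lambda_min ((G theta_star)^T *m W *m G theta_star) in hc lampos.
  set S := \sum_(k < L) a k * (delta_mu k zeta + Num.sqrt (eps / (1 - 2 * eps)) * Num.sqrt (C k)) + delta_opt in hs.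
  set Psi := \sum_(k < L) a k *: mu_g k (theta_hat w) in hc hs.
  set dn := norm2 (theta_hat w - theta_star) in hc *.
  have hd0 : 0 <= dn by apply: norm2_ge0.
  have hP0 : 0 <= norm2 Psi by apply: norm2_ge0.
  have hcs := CS' (theta_hat w - theta_star) Psi; rewrite -/dn in hcs.
  have hb' : bound = 2 / lam * S by [].
  rewrite hb'.
  have [dz|dpos] := eqVneq dn 0.
    rewrite dz; apply: mulr_ge0; [apply: divr_ge0 => //; exact: ltW | exact: le_trans hP0 hs].
  have dpos' : 0 < dn by rewrite lt_def dpos hd0.
  have h1 : lam / 2 * dn <= S.
    have h2 : lam / 2 * dn ^+ 2 <= dn * S.
      apply: le_trans hc _; apply: le_trans hcs _; nra.
    rewrite expr2 mulrA in h2.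
    by rewrite -(ler_pM2r dpos') [S * dn]mulrC.
  have -> : 2 / lam * S = S / (lam / 2) by field; rewrite gt_eqF.
  by rewrite ler_pdivlMr ?divr_gt0 // mulrC.
split; first exact: key.
by exists E; split => //; split => //; exact: key.
Qed.
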